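(* Let $T=(A_1;A_2;\dots;A_p)$ be an $m\times p\times n$ quaternion tensor and $r\ge1$ an integer. Then $\mathrm{rank}(T)\le r$ if and only if there exist $r\times r$ diagonal matrices $D_1,\dots,D_p$ with quaternion entries, an $m\times r$ quaternion matrix $P$ and an $r\times n$ quaternion matrix $Q$ such that $A_k=PD_kQ$ for all $k=1,\dots,p$.
   Context: $\mathbb{H}$ denotes the real quaternions. An $n_1\times n_2\times n_3$ quaternion tensor is an array $T=(T_{ijk})$ with entries in $\mathbb{H}$, $1\le i\le n_1$, $1\le j\le n_2$, $1\le k\le n_3$; it is written $T=(A_1;\dots;A_{n_2})$ where the frontal slice $A_j$ is the $n_1\times n_3$ matrix $(T_{ijk})_{i,k}$. A nonzero tensor is simple if $T_{ijk}=a_ib_jc_k$ (quaternion product in this order) for some $\vec a\in\mathbb{H}^{n_1},\vec b\in\mathbb{H}^{n_2},\vec c\in\mathbb{H}^{n_3}$. The rank of $T$ is the least number of simple tensors summing to $T$ (rank of zero tensor is $0$). *)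

(* Defs.v *)
From HB Require Import structures.
From mathcomp Require Import all_boot all_order all_algebra.
From mathcomp Require Import ring.
From mathcomp Require Import boolp reals.
Set Implicit Arguments. Unset Strict Implicit. Unset Printing Implicit Defensive.
Import Order.TTheory GRing.Theory Num.Theory.
Local Open Scope ring_scope.

(* Real quaternions  H = { q0 + q1 i + q2 j + q3 k }  over R : realType *)
Section Quaternions.
Variable R : realType.

Record quat := Quat { q0 : R; q1 : R; q2 : R; q3 : R }.

Definition quat2tup (q : quat) := (q0 q, q1 q, q2 q, q3 q).
Definition tup2quat (t : R * R * R * R) := let: (a, b, c, d) := t in Quat a b c d.
Lemma quat2tupK : cancel quat2tup tup2quat. Proof. by case. Qed.

HB.instance Definition _ := Choice.copy quat (can_type quat2tupK).

Definition quat0 := Quat 0 0 0 0.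
Definition quat1 := Quat 1 0 0 0.
Definition quat_add (a b : quat) :=
  Quat (q0 a + q0 b) (q1 a + q1 b) (q2 a + q2 b) (q3 a + q3 b).
Definition quat_opp (a : quat) := Quat (- q0 a) (- q1 a) (- q2 a) (- q3 a).
(* Hamilton product: i^2 = j^2 = k^2 = ijk = -1 *)
Definition quat_mul (a b : quat) :=
  Quat (q0 a * q0 b - q1 a * q1 b - q2 a * q2 b - q3 a * q3 b)
       (q0 a * q1 b + q1 a * q0 b + q2 a * q3 b - q3 a * q2 b)
       (q0 a * q2 b - q1 a * q3 b + q2 a * q0 b + q3 a * q1 b)
       (q0 a * q3 b + q1 a * q2 b - q2 a * q1 b + q3 a * q0 b).

Lemma quat_addA : associative quat_add.
Proof. by case=> ????[????][????]; congr Quat => /=; ring. Qed.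
Lemma quat_addC : commutative quat_add.
Proof. by case=> ????[????]; congr Quat => /=; ring. Qed.
Lemma quat_add0 : left_id quat0 quat_add.
Proof. by case=> ????; congr Quat => /=; ring. Qed.
Lemma quat_addN : left_inverse quat0 quat_opp quat_add.
Proof. by case=> ????; congr Quat => /=; ring. Qed.

HB.instance Definition _ := GRing.isZmodule.Build quat
  quat_addA quat_addC quat_add0 quat_addN.

Lemma quat_mulA : associative quat_mul.
Proof. by case=> ????[????][????]; congr Quat => /=; ring. Qed.
Lemma quat_mul1 : left_id quat1 quat_mul.
Proof. by case=> ????; congr Quat => /=; ring. Qed.
Lemma quat_mulr1 : right_id quat1 quat_mul.
Proof. by case=> ????; congr Quat => /=; ring. Qed.
Lemma quat_mulDl : left_distributive quat_mul +%R.
Proof. by case=> ????[????][????]; congr Quat => /=; ring. Qed.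
Lemma quat_mulDr : right_distributive quat_mul +%R.
Proof. by case=> ????[????][????]; congr Quat => /=; ring. Qed.
Lemma quat1_neq0 : quat1 != 0.
Proof. by apply/eqP => -[] /eqP; rewrite oner_eq0. Qed.

HB.instance Definition _ := GRing.Zmodule_isNzRing.Build quat
  quat_mulA quat_mul1 quat_mulr1 quat_mulDl quat_mulDr quat1_neq0.

End Quaternions.

Definition qtensor (R : realType) (n1 n2 n3 : nat) :=
  {ffun 'I_n1 * 'I_n2 * 'I_n3 -> quat R}.

Definition simple_tensor (R : realType) n1 n2 n3 (T : qtensor R n1 n2 n3) : Prop :=
  T != 0 /\
  exists (a : 'I_n1 -> quat R) (b : 'I_n2 -> quat R) (c : 'I_n3 -> quat R),
    forall i j k, T (i, j, k) = a i * b j * c k.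

Definition sum_of_simple (R : realType) n1 n2 n3 (T : qtensor R n1 n2 n3) (s : nat) : Prop :=
  exists l : seq (qtensor R n1 n2 n3),
    [/\ size l = s, (forall S, S \in l -> simple_tensor S) & T = \sum_(S <- l) S].

Definition unit_tensor (R : realType) n1 n2 n3 (x : 'I_n1 * 'I_n2 * 'I_n3) (v : quat R)
  : qtensor R n1 n2 n3 := [ffun y => if y == x then v else 0].

Lemma sum_of_simple_exists (R : realType) n1 n2 n3 (T : qtensor R n1 n2 n3) :
  exists s, sum_of_simple T s.
Proof.
set l := [seq unit_tensor x (T x) | x <- enum [pred x | T x != 0]].
exists (size l), l; split => //.
- move=> S /mapP [[[i j] k] + ->]; rewrite mem_enum inE => Tx.
  split.
    apply/eqP => /ffunP /(_ (i, j, k)); rewrite !ffunE eqxx => E.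
    by rewrite E eqxx in Tx.
  exists (fun i' => if i' == i then 1 else 0), (fun j' => if j' == j then T (i, j, k) else 0),
         (fun k' => if k' == k then 1 else 0) => i' j' k'; rewrite ffunE.
  rewrite !xpair_eqE.
  idtac.
  case: (eqVneq i' i) => [_|_] /=; last by rewrite !mul0r.
  case: (eqVneq j' j) => [_|_] /=; last by rewrite mulr0 mul0r.
  by case: (eqVneq k' k) => [_|_] /=; rewrite ?mul1r ?mulr1 ?mulr0.
- apply/ffunP => x; rewrite big_map sum_ffunE.
  have [Tx0|Txn] := eqVneq (T x) 0.
    rewrite Tx0 big1_seq // => y _; rewrite ffunE.
    by case: eqP => // <-.
  rewrite (bigD1_seq x) ?enum_uniq ?mem_enum ?inE //=.
  rewrite ffunE eqxx big1_seq ?addr0 // => y /andP[yx _].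
  by rewrite ffunE eq_sym (negbTE yx).
Qed.

Lemma sum_of_simple_exists' (R : realType) n1 n2 n3 (T : qtensor R n1 n2 n3) :
  exists s, `[< sum_of_simple T s >].
Proof. by have [s Hs] := sum_of_simple_exists T; exists s; apply/asboolP. Qed.

Definition tensor_rank (R : realType) n1 n2 n3 (T : qtensor R n1 n2 n3) : nat :=
  ex_minn (P := fun s => `[< sum_of_simple T s >]) (sum_of_simple_exists' T).

Lemma tensor_rankP (R : realType) n1 n2 n3 (T : qtensor R n1 n2 n3) :
  sum_of_simple T (tensor_rank T) /\
  forall s, sum_of_simple T s -> (tensor_rank T <= s)%N.
Proof.
rewrite /tensor_rank; case: ex_minnP => s /asboolP Hs Hmin; split => // t Ht.
by apply: Hmin; apply/asboolP.
Qed.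

Definition frontal_slice (R : realType) n1 n2 n3 (T : qtensor R n1 n2 n3) (j : 'I_n2)
  : 'M[quat R]_(n1, n3) := \matrix_(i < n1, k < n3) T (i, j, k).

(* Main.v *)
Require Import Defs.
From HB Require Import structures.
From mathcomp Require Import all_boot all_order all_algebra.
From mathcomp Require Import boolp reals.
Import Order.TTheory GRing.Theory Num.Theory.
Local Open Scope ring_scope.

Theorem mainTheorem2 (R : realType) (m p n r : nat) (T : qtensor R m p n) :
  (1 <= r)%N ->
  ((tensor_rank T <= r)%N <->
   exists (D : 'I_p -> 'M[quat R]_r) (P : 'M[quat R]_(m, r)) (Q : 'M[quat R]_(r, n)),
     (forall k, is_diag_mx (D k)) /\
     (forall k, frontal_slice T k = P *m D k *m Q)).
Proof.
move=> _; split.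
- move=> Hr; have [[l [sz Hs ->]] _] := tensor_rankP T.
  have Esum : \sum_(S <- l) S = \sum_(t < r) nth 0 l t.
    rewrite (big_nth 0) big_mkord (big_ord_widen _ _ (_ : size l <= r)%N); last by rewrite sz.
    rewrite big_mkcond; apply: eq_bigr => t _.
    by case: ifP => // /negbT; rewrite -leqNgt => /(nth_default 0) ->.
  have H : forall t : 'I_r, exists abc : ('I_m -> quat R) * ('I_p -> quat R) * ('I_n -> quat R),
      forall i j k, nth 0 l t (i, j, k) = abc.1.1 i * abc.1.2 j * abc.2 k.
    move=> t; case: (ltnP t (size l)) => ht.
      have [_ [a [b [c E]]]] := Hs _ (mem_nth 0 ht).
      by exists (a, b, c).
    exists (fun _ => 0, fun _ => 0, fun _ => 0) => i j k.
    by rewrite nth_default // ffunE mulr0.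
  have [f Hf] := choice H.
  exists (fun j => diag_mx (\row_t (f t).1.2 j)),
         (\matrix_(i, t) (f t).1.1 i), (\matrix_(t, k) (f t).2 k); split.
    by move=> k; apply/is_diag_mxP => i j ij; rewrite !mxE; case: eqP => [e|_]; [by rewrite e eqxx in ij | by rewrite mulr0n].
  move=> j; apply/matrixP => i k; rewrite mul_mx_diag !mxE Esum sum_ffunE.
  apply: eq_bigr => t _; by rewrite Hf !mxE.
- move=> [D [P [Q [Hd HT]]]].
  pose L (t : 'I_r) : qtensor R m p n := [ffun x => P x.1.1 t * D x.1.2 t t * Q t x.2].
  have ET : T = \sum_t L t.
    apply/ffunP => -[[i j] k]; rewrite sum_ffunE.
    have := congr1 (fun M : 'M[quat R]_(m, n) => M i k) (HT j); rewrite /frontal_slice !mxE /= => ->.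
    apply: eq_bigr => t _; rewrite ffunE /= mxE (bigD1 t) //= big1 ?addr0 //.
    move=> u ut; have := Hd j; move=> /is_diag_mxP /(_ u t) ->; [by rewrite mulr0 ?mul0r | exact: ut].
  set l := [seq L t | t <- enum 'I_r & L t != 0].
  have : sum_of_simple T (size l).
    exists l; split => //.
      move=> S /mapP [t]; rewrite mem_filter => /andP [nz _] ->; split => //.
      exists (fun i => P i t), (fun j => D j t t), (fun k => Q t k) => i j k.
      by rewrite ffunE.
    rewrite ET big_map big_filter big_enum_cond (bigID (fun t => L t != 0)) /= [X in _ + X = _]big1 ?addr0.
      by apply: eq_bigl => t.
    by move=> t /negPn/eqP.
  move=> /(proj2 (tensor_rankP T)) h; apply: leq_trans h _.
  rewrite size_map size_filter; apply: leq_trans (count_size _ _) _; by rewrite size_enum_ord.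
Qed.
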